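(* Let $\Omega$ be a finite set and let $f_1,\ldots,f_n\in\mathbb{R}^{\Omega}$ be gambles. Let $$\mathcal M=\{p\in\mathbb{R}^{\Omega}: p\cdot f_i\ge 0 \text{ for } i=1,\ldots,n,\ p\cdot 1_\Omega=1\},$$ and assume $\mathcal M$ is a nonempty credal set (a nonempty, closed, convex set of probability mass vectors) and that for each $i$ there is $p\in\mathcal M$ with $p\cdot f_i=0$. For a gamble $h$ write $\underline{E}(h)=\min_{P\in\mathcal M}P\cdot h$. Let $E\in\mathcal M$, let $h$ be a gamble with $E\cdot h=\underline{E}(h)$, and let $I=\{i: E\cdot f_i=0\}$. For $i\in I$ let $f'_i$ be the unique vector such that $f_i-f'_i=c_i1_\Omega$ for some constant $c_i\in\mathbb{R}$ and $f'_i\cdot 1_\Omega=0$. Then there exist $\alpha'_i\ge 0$ for $i\in I$ and $\beta'\in\mathbb{R}$ such that $$h=\sum_{i\in I}\alpha'_i f'_i+\beta' 1_\Omega.$$ Moreover, $$\Big\|\sum_{i\in I}\alpha'_i f'_i\Big\|\le\Big\|\sum_{i\in I}\alpha'_i f'_i+\beta 1_\Omega\Big\|\quad\text{for every }\beta\in\mathbb{R}.$$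
   Context: Gambles are real-valued maps on the finite set $\Omega$, identified with vectors in $\mathbb{R}^{\Omega}$; $f\cdot g=\sum_{x\in\Omega}f(x)g(x)$ is the standard inner product and $\|f\|=\sqrt{f\cdot f}$ the Euclidean norm; $1_\Omega$ is the constant gamble $1$. Linear previsions are identified with probability mass vectors $P$, with $P(f)=P\cdot f$. *)

(* Defs.v *)
From HB Require Import structures.
From mathcomp Require Import all_boot all_order all_algebra.
From mathcomp Require Import reals.
Set Implicit Arguments. Unset Strict Implicit. Unset Printing Implicit Defensive.
Import Order.TTheory GRing.Theory Num.Theory.
Local Open Scope ring_scope.

Definition gamble (R : realType) (Omega : finType) := Omega -> R.

Definition dot (R : realType) (Omega : finType) (f g : gamble R Omega) : R :=
  \sum_(x : Omega) f x * g x.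

Definition gamble_norm (R : realType) (Omega : finType) (f : gamble R Omega) : R :=
  Num.sqrt (dot f f).

Definition one_g (R : realType) (Omega : finType) : gamble R Omega := fun _ => 1.
Arguments one_g : clear implicits.

Definition credalM (R : realType) (Omega : finType) (n : nat)
  (f : 'I_n -> gamble R Omega) (p : gamble R Omega) : Prop :=
  (forall i, 0 <= dot p (f i)) /\ dot p (one_g R Omega) = 1.

Definition attains_lower (R : realType) (Omega : finType)
  (M : gamble R Omega -> Prop) (E h : gamble R Omega) : Prop :=
  forall P, M P -> dot E h <= dot P h.

(* Main.v *)
Require Import Defs.
From HB Require Import structures.
From mathcomp Require Import all_boot all_order all_algebra.
From mathcomp Require Import reals ring lra.
From Stdlib Require Import Classical.
Import Order.TTheory GRing.Theory Num.Theory.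
Local Open Scope ring_scope.


Lemma dotC {R : realType} {Omega : finType} (u v : gamble R Omega) : dot u v = dot v u.
Proof. by apply: eq_bigr => x _; rewrite mulrC. Qed.

Lemma dot_lin {R : realType} {Omega : finType} (u v : gamble R Omega) c (w : gamble R Omega) : dot (fun x => u x + c * v x) w = dot u w + c * dot v w.
Proof.
rewrite /dot mulr_sumr -big_split /=; apply: eq_bigr => x _; ring.
Qed.

Lemma dot_linr {R : realType} {Omega : finType} (u v : gamble R Omega) c (w : gamble R Omega) : dot w (fun x => u x + c * v x) = dot w u + c * dot w v.
Proof. by rewrite dotC dot_lin !(dotC w). Qed.

Lemma farkas {R : realType} {Omega : finType} m : forall (a : nat -> gamble R Omega) (b : gamble R Omega),
  (forall d, (forall k, (k < m)%N -> 0 <= dot (a k) d) -> 0 <= dot b d) ->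
  exists lam : nat -> R, (forall k, 0 <= lam k) /\
    forall w, b w = \sum_(k < m) lam k * a k w.
Proof.
elim: m => [|m IH] a b H.
  exists (fun _ => 0); split => // w; rewrite big_ord0.
  have := H (fun y => if y == w then - b w else 0) (fun k => ltac:(done)).
  rewrite /dot (bigD1 w) //= eqxx big1 => [|y /negbTE ->]; last by rewrite mulr0.
  move=> Hw; nra.
case: (classic (forall d, (forall k, (k < m)%N -> 0 <= dot (a k) d) -> 0 <= dot b d)) => [H1|H1].
  have [lam [lam0 Hl]] := IH a b H1.
  exists (fun k => if (k < m)%N then lam k else 0); split.
    by move=> k; case: ifP.
  move=> w; rewrite big_ord_recr /= ltnn mul0r addr0 Hl.
  by apply: eq_bigr => k _; rewrite ltn_ord.
have [x0 Hx0] := not_all_ex_not _ _ H1.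
have [Hk0 Hb0] := imply_to_and _ _ Hx0.
have {}Hb0 : dot b x0 < 0 by rewrite ltNge; apply/negP.
have Hm0 : dot (a m) x0 < 0.
  rewrite ltNge; apply/negP => Hm; move: Hb0; rewrite ltNge H //.
  by move=> k; rewrite ltnS leq_eqVlt => /orP [/eqP ->|/Hk0].
set D := dot (a m) x0.
have HD : D != 0 by rewrite ltr0_neq0.
pose a' k := fun w => a k w + (- (dot (a k) x0 / D)) * a m w.
pose b' := fun w => b w + (- (dot b x0 / D)) * a m w.
have H' : forall d, (forall k, (k < m)%N -> 0 <= dot (a' k) d) -> 0 <= dot b' d.
  move=> d Hd.
  pose y := fun w => d w + (- (dot (a m) d / D)) * x0 w.
  have Ey : forall g, dot g y = dot (fun w => g w + (- (dot g x0 / D)) * a m w) d.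
    move=> g; rewrite dot_linr dot_lin; field; exact: HD.
  rewrite /b' -Ey; apply: H => k; rewrite ltnS leq_eqVlt => /orP [/eqP ->|Hk].
    rewrite dot_linr -/D.
    have -> : dot (a m) d + - (dot (a m) d / D) * D = 0 by field; exact: HD.
    by [].
  by rewrite Ey; apply: Hd.
have [mu [mu0 Hmu]] := IH a' b' H'.
pose S := \sum_(k < m) mu k * dot (a k) x0.
have S0 : 0 <= S by apply: sumr_ge0 => k _; apply: mulr_ge0 => //; apply: Hk0.
exists (fun k => if (k < m)%N then mu k else (dot b x0 - S) / D); split.
  move=> k; case: ifP => // _.
  have -> : (dot b x0 - S) / D = (S - dot b x0) / (- D).
    by field.
  apply: divr_ge0; rewrite /D; lra.
move=> w; rewrite big_ord_recr /= ltnn.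
have := Hmu w; rewrite /b' /a' => Hw.
under eq_bigr => k _ do rewrite ltn_ord.
have E1 : \sum_(i < m) mu i * (a i w + - (dot (a i) x0 / D) * a m w) =
   \sum_(i < m) mu i * a i w - S / D * a m w.
  rewrite /S mulr_suml mulr_suml -sumrB; apply: eq_bigr => k _; field.
  done.
rewrite E1 in Hw.
have : b w = \sum_(i < m) mu i * a i w - S / D * a m w + dot b x0 / D * a m w.
  rewrite -Hw; ring.
move=> ->; field.
exact: HD.
Qed.

Lemma dot_m1 {R : realType} {Omega : finType} (d : gamble R Omega) :
  dot (fun _ => -1) d = - dot (one_g R Omega) d.
Proof. by rewrite /dot -sumrN; apply: eq_bigr => x _; rewrite /one_g mulN1r mul1r. Qed.

Theorem corollary3 (R : realType) (Omega : finType) (n : nat)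
  (f : 'I_n -> gamble R Omega)
  (Hne : exists p, credalM f p)
  (Hprob : forall p, credalM f p -> forall x, 0 <= p x)
  (Htight : forall i, exists p, credalM f p /\ dot p (f i) = 0)
  (E h : gamble R Omega)
  (HE : credalM f E)
  (Hh : attains_lower (credalM f) E h)
  (f' : 'I_n -> gamble R Omega)
  (Hf'c : forall i, dot E (f i) = 0 -> exists c : R, forall x, f i x - f' i x = c)
  (Hf'0 : forall i, dot E (f i) = 0 -> dot (f' i) (one_g R Omega) = 0) :
  exists alpha : 'I_n -> R,
    (forall i, dot E (f i) = 0 -> 0 <= alpha i) /\
    (exists beta' : R,
       forall x, h x = \sum_(i | dot E (f i) == 0) alpha i * f' i x + beta')
    /\
    (forall beta : R,
       gamble_norm (fun x => \sum_(i | dot E (f i) == 0) alpha i * f' i x)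
       <= gamble_norm (fun x => \sum_(i | dot E (f i) == 0) alpha i * f' i x + beta)).
Proof.
pose a : nat -> gamble R Omega := fun k =>
  if insub k is Some i then (if dot E (f i) == 0 then f i else (fun _ => 0))
  else if k == n then one_g R Omega else (fun _ => -1).
have aI : forall i : 'I_n, a i = if dot E (f i) == 0 then f i else (fun _ => 0).
  by move=> i; rewrite /a valK.
have an : a n = one_g R Omega.
  by rewrite /a insubF ?ltnn ?eqxx.
have an1 : a n.+1 = (fun _ => -1).
  by rewrite /a insubF ?ltnSn ?ltnNge ?leqnSn // eqn_leq ltnn.
have Hfar : forall d, (forall k, (k < n.+2)%N -> 0 <= dot (a k) d) -> 0 <= dot h d.
  move=> d Hd.
  have Hact : forall i : 'I_n, dot E (f i) = 0 -> 0 <= dot d (f i).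
    move=> i Hi; have := Hd i; rewrite aI Hi eqxx dotC; apply.
    by apply: (ltn_trans (ltn_ord i)); rewrite ltnS leqnSn.
  have s1 := Hd n; rewrite an in s1; have {}s1 := s1 (ltnW (ltnSn n.+1)).
  have s2 := Hd n.+1; rewrite an1 dot_m1 in s2; have {}s2 := s2 (ltnSn n.+1).
  have s0 : dot d (one_g R Omega) = 0 by rewrite dotC; lra.
  pose K := \sum_(i : 'I_n) `|dot d (f i)| / dot E (f i).
  have Ege : forall i, 0 <= dot E (f i) by move=> i; exact: HE.1.
  have K0 : 0 <= K by apply: sumr_ge0 => i _; apply: divr_ge0.
  have Kge : forall i, `|dot d (f i)| / dot E (f i) <= K.
    move=> i; rewrite /K (bigD1 i) //= lerDl; apply: sumr_ge0 => j _; apply: divr_ge0 => //.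
  pose t := (1 + K)^-1.
  have t0 : 0 < t by rewrite invr_gt0; lra.
  have tK : t * (1 + K) = 1 by rewrite mulVf //; apply/negP => /eqP; lra.
  pose P := fun x => E x + t * d x.
  have HP : credalM f P.
    split.
      move=> i; rewrite /P dot_lin.
      have [Hi|Hi] := eqVneq (dot E (f i)) 0.
        by rewrite Hi add0r; apply: mulr_ge0; [lra | exact: Hact].
      set e := dot E (f i); set g := dot d (f i).
      have e0 : 0 < e by rewrite lt_def Hi Ege.
      have gK : `|g| <= e * K.
        by rewrite -ler_pdivrMl // mulrC; exact: Kge.
      have h1 : 0 <= t * (e * K - `|g|) by apply: mulr_ge0; lra.
      have h2 : 0 <= t * (`|g| + g).
        apply: mulr_ge0; first lra.
        by rewrite -lerBlDr sub0r; rewrite -normrN ler_norm.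
      have h3 : 0 <= e * t by apply: mulr_ge0; lra.
      have h4 : e * (t * (1 + K)) = e by rewrite tK mulr1.
      nra.
    by rewrite /P dot_lin HE.2 s0 mulr0 addr0.
  have := Hh P HP; rewrite /P dot_lin -lerBlDl subrr dotC.
  by rewrite pmulr_rge0.
have [lam [lam0 Hl]] := @farkas _ _ n.+2 a h Hfar.
exists (fun i => lam i); split; first by move=> i _; exact: lam0.
split.
  case: (pickP (fun _ : Omega => true)) => [w0 _|none]; last first.
    by exists 0 => x; have := none x.
  exists (\sum_(i | dot E (f i) == 0) lam i * (f i w0 - f' i w0) + lam n - lam n.+1).
  move=> x; rewrite Hl !big_ord_recr /= an an1 /one_g.
  have -> : \sum_(i < n) lam (widen_ord (leqnSn n.+1) (widen_ord (leqnSn n) i)) *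
      a (widen_ord (leqnSn n.+1) (widen_ord (leqnSn n) i)) x =
      \sum_(i | dot E (f i) == 0) lam i * (f' i x + (f i w0 - f' i w0)).
    rewrite [RHS]big_mkcond /=; apply: eq_bigr => i _ /=.
    have -> : a i = if dot E (f i) == 0 then f i else (fun _ => 0) by exact: aI.
    case: eqP => // Hi; last by rewrite mulr0.
    have [c Hc] := Hf'c i Hi.
    congr (_ * _); have := Hc x; have := Hc w0; lra.
  rewrite mulr1 mulrN1 !addrA; congr (_ + _ - _).
  rewrite -big_split /=; apply: eq_bigr => i _; ring.
move=> beta.
set g := fun x => _.
have g0 : dot g (one_g R Omega) = 0.
  rewrite /dot /g /one_g.
  under eq_bigr do rewrite mulr1.
  rewrite exchange_big /=; apply: big1 => i Hi.
  rewrite -mulr_sumr; have := Hf'0 i (eqP Hi); rewrite /dot /one_g.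
  under eq_bigr do rewrite mulr1.
  by move=> ->; rewrite mulr0.
rewrite /gamble_norm; apply: ler_wsqrtr.
have -> : dot (fun x => g x + beta) (fun x => g x + beta) =
    dot g g + (2 * beta) * dot g (one_g R Omega) + \sum_(x : Omega) beta * beta.
  rewrite /dot mulr_sumr -!big_split /=; apply: eq_bigr => x _; rewrite /one_g; ring.
rewrite g0 mulr0 addr0 lerDl; apply: sumr_ge0 => x _; nra.
Qed.
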